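(* Let $d\ge 2$, let $\mathcal{V}\subset\mathbb{R}^d$ be a finite vertex set in general position, and let $\tau$ be the Delaunay mesh of $\mathcal{V}$. Let $Q=\{v_1,\ldots,v_m\}\subset\mathcal{V}$ with $m\ge d$ (in the application, $Q$ consists of interface vertices of a mesh interface $\Gamma_\tau$) such that the closed ball bounded by the minimum covering sphere of $Q$ contains no vertex of $\mathcal{V}$ other than $v_1,\ldots,v_m$. Then for any two vertices $p_1,p_2\in\mathcal{V}\setminus Q$: if the segment $\overline{p_1p_2}$ intersects $\operatorname{conv}(Q)$, then $\overline{p_1p_2}$ is not an edge of the Delaunay mesh $\tau$.
   Context: A mesh of $\Omega=\operatorname{conv}(\mathcal{V})$ is a partition of $\Omega$ into nondegenerate $d$-simplices with vertices in $\mathcal{V}$; an edge of a simplex is the segment between two of its vertices. The Delaunay mesh $\tau(\mathcal{V})$ is the (unique, under general position) mesh such that the circumsphere of each cell contains no vertex of $\mathcal{V}$ in its interior other than the cell's own vertices. The minimum covering sphere of a non-empty finite set $Q$ is the smallest sphere such that every point of $Q$ lies inside it or on it. A finite point set in $\mathbb{R}^d$ is in general position if for each $i=1,\ldots,d$ no $i+1$ of its points lie in an affine subspace of dimension $i-1$, and no $d+2$ of its points lie on a common sphere. A mesh interface $\Gamma_\tau$ is a $(d-1)$-dimensional mesh formed by $(d-1)$-dimensional facets of cells of $\tau$ forming a surface in $\mathbb{R}^d$; its vertices are called interface vertices. *)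

(* Defs.v *)
From HB Require Import structures.
From mathcomp Require Import all_boot all_order all_algebra.
From mathcomp Require Import reals.
Set Implicit Arguments. Unset Strict Implicit. Unset Printing Implicit Defensive.
Import Order.TTheory GRing.Theory Num.Theory.
Local Open Scope ring_scope.

Section Defs.
Variables (R : realType) (d : nat).
Notation pt := 'rV[R]_d.

Definition sqdist (x y : pt) : R := \sum_(i < d) (x ord0 i - y ord0 i) ^+ 2.

Definition in_conv (s : seq pt) (x : pt) : Prop :=
  exists w : 'I_(size s) -> R,
    (forall i, 0 <= w i) /\ \sum_i w i = 1 /\ x = \sum_i w i *: s`_i.

Definition in_open_simplex (s : seq pt) (x : pt) : Prop :=
  exists w : 'I_(size s) -> R,
    (forall i, 0 < w i) /\ \sum_i w i = 1 /\ x = \sum_i w i *: s`_i.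

Definition in_segment (p1 p2 x : pt) : Prop :=
  exists t : R, 0 <= t <= 1 /\ x = (1 - t) *: p1 + t *: p2.

Definition aff_indep (s : seq pt) : Prop :=
  forall w : 'I_(size s) -> R,
    \sum_i w i = 0 -> \sum_i w i *: s`_i = 0 -> forall i, w i = 0.

Definition in_affine_subspace (k : nat) (s : seq pt) : Prop :=
  exists (a : pt) (u : 'I_k -> pt),
    forall p, p \in s -> exists c : 'I_k -> R, p = a + \sum_j c j *: u j.

Definition cospherical (s : seq pt) : Prop :=
  exists (c : pt) (rho : R), 0 < rho /\ forall p, p \in s -> sqdist p c = rho.

Definition general_position (V : seq pt) : Prop :=
  (forall i : nat, (1 <= i <= d)%N ->
     forall s : seq pt, uniq s -> {subset s <= V} -> size s = i.+1 ->
       ~ in_affine_subspace i.-1 s) /\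
  (forall s : seq pt, uniq s -> {subset s <= V} -> size s = d.+2 ->
       ~ cospherical s).

Definition is_mesh (V : seq pt) (tau : seq (seq pt)) : Prop :=
  (forall C, C \in tau ->
     [/\ size C = d.+1, uniq C, {subset C <= V} & aff_indep C]) /\
  (forall x, in_conv V x <-> exists2 C, C \in tau & in_conv C x) /\
  (forall i j : nat, (i < j < size tau)%N ->
     forall x, ~ (in_open_simplex (nth [::] tau i) x /\
                  in_open_simplex (nth [::] tau j) x)).

Definition is_delaunay_mesh (V : seq pt) (tau : seq (seq pt)) : Prop :=
  is_mesh V tau /\
  forall C, C \in tau ->
    forall (c : pt) (rho : R), (forall p, p \in C -> sqdist p c = rho) ->
      forall v, v \in V -> v \notin C -> ~ (sqdist v c < rho).

Definition min_covering_sphere (Q : seq pt) (c : pt) (rho : R) : Prop :=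
  (forall q, q \in Q -> sqdist q c <= rho) /\
  (forall (c' : pt) (rho' : R),
     (forall q, q \in Q -> sqdist q c' <= rho') -> rho <= rho').

Definition is_mesh_edge (tau : seq (seq pt)) (p1 p2 : pt) : Prop :=
  p1 != p2 /\ exists2 C, C \in tau & (p1 \in C) && (p2 \in C).

End Defs.

(* Main.v *)
Require Import Defs.
From HB Require Import structures.
From mathcomp Require Import all_boot all_order all_algebra.
From mathcomp Require Import reals.
From mathcomp Require Import ring lra.
Import Order.TTheory GRing.Theory Num.Theory.
Local Open Scope ring_scope.

Section H.
Variables (R : realType) (d : nat).
Notation pt := 'rV[R]_d.

Definition Lf (k : 'I_d -> R) (y : pt) : R := \sum_i y ord0 i * k i.

Lemma sqdistB (y a b : pt) : sqdist y a - sqdist y b =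
  Lf (fun i => 2 * (b ord0 i - a ord0 i)) y + \sum_i (a ord0 i ^+ 2 - b ord0 i ^+ 2).
Proof.
rewrite /sqdist /Lf -sumrB -big_split /=; apply: eq_bigr => i _; ring.
Qed.

Lemma Lf_seg k (p1 p2 : pt) t : Lf k ((1 - t) *: p1 + t *: p2) = (1 - t) * Lf k p1 + t * Lf k p2.
Proof.
rewrite /Lf !mulr_sumr -big_split /=; apply: eq_bigr => i _; rewrite !mxE; ring.
Qed.

Lemma Lf_sum k n (w : 'I_n -> R) (q : 'I_n -> pt) :
  Lf k (\sum_j w j *: q j) = \sum_j w j * Lf k (q j).
Proof.
rewrite /Lf; under eq_bigr => i _ do rewrite summxE mulr_suml.
rewrite exchange_big /=; apply: eq_bigr => j _; rewrite mulr_sumr.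
by apply: eq_bigr => i _; rewrite mxE mulrA.
Qed.

Lemma circum (s : seq pt) : size s = d.+1 -> aff_indep s ->
  exists (c : pt) (r : R), forall p, p \in s -> sqdist p c = r.
Proof.
move=> Hsz Hs.
pose M : 'M[R]_d := \matrix_(i, j) (s`_i.+1 - s`_0) ord0 j.
have rowM j : row j M = s`_j.+1 - s`_0 by apply/rowP => l; rewrite !mxE.
have unitM : M \in unitmx.
  rewrite -row_free_unit -kermx_eq0; apply/negPn/negP => Hk.
  have [i Hi] : exists i, row i (kermx M) != 0.
    case: (pickP (fun i => row i (kermx M) != 0)) => [i Hi|H0]; first by exists i.
    exfalso; apply/(negP Hk)/eqP/row_matrixP => i; rewrite row0.
    by move: (H0 i) => /negbFE/eqP.
  set w := row i (kermx M) in Hi.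
  have wM : w *m M = 0 by rewrite /w -row_mul mulmx_ker row0.
  pose W := fun k : nat => if k is k'.+1 then (if @insub _ (fun x => (x < d)%N) 'I_d k' is Some j then w ord0 j else 0)
                          else - \sum_j w ord0 j.
  have HW : forall j : 'I_d, W j.+1 = w ord0 j by move=> j; rewrite /= valK.
  have := Hs (fun k => W k).
  have E1 : \sum_(k < size s) W k = 0.
    rewrite -(big_mkord xpredT W) Hsz big_nat_recl // big_mkord.
    under eq_bigr => j _ do rewrite HW. by rewrite /= addNr.
  have E2 : \sum_(k < size s) W k *: s`_k = 0.
    rewrite -(big_mkord xpredT (fun k => W k *: s`_k)) Hsz big_nat_recl // big_mkord.
    under eq_bigr => j _ do rewrite HW.
    have wM' : \sum_(j<d) w ord0 j *: (s`_j.+1 - s`_0) = 0.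
      by rewrite -[RHS]wM mulmx_sum_row; apply: eq_bigr => j _; rewrite rowM.
    rewrite -[RHS]wM' /= scaleNr scaler_suml addrC -sumrB.
    by apply: eq_bigr => j _; rewrite scalerBr.
  move=> /(_ E1 E2) H; apply/(negP Hi)/eqP/rowP => j.
  have Hj : (j.+1 < size s)%N by rewrite Hsz ltnS ltn_ord.
  have HH' : W j.+1 = 0 := H (Ordinal Hj).
  rewrite HW in HH'; rewrite [RHS]mxE; exact: HH'.
pose bb : 'cV[R]_d := \col_i ((\sum_l (s`_i.+1 ord0 l) ^+ 2 - \sum_l (s`_0 ord0 l) ^+ 2) / 2).
pose cc := invmx M *m bb.
have Mcc : M *m cc = bb by rewrite /cc mulKVmx.
exists cc^T, (sqdist s`_0 cc^T) => p ps.
have ip : (index p s < size s)%N by rewrite index_mem.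
rewrite -(nth_index 0 ps).
move: ip; case: (index p s) => [//|j]; rewrite Hsz ltnS => jd.
have := congr1 (fun A : 'M[R]_(d,1) => A (Ordinal jd) ord0) Mcc.
rewrite !mxE /= => E.
apply/eqP; rewrite -subr_eq0; apply/eqP.
rewrite /sqdist -sumrB.
have -> : \sum_l ((s`_j.+1 ord0 l - cc^T ord0 l) ^+ 2 - (s`_0 ord0 l - cc^T ord0 l) ^+ 2)
   = (\sum_l (s`_j.+1 ord0 l) ^+ 2 - \sum_l (s`_0 ord0 l) ^+ 2)
     - 2 * \sum_l (M (Ordinal jd) l * cc l 0).
  rewrite mulr_sumr -!sumrB; apply: eq_bigr => l _; rewrite !mxE /=; ring.
by rewrite E; field.
Qed.
End H.

Theorem mainTheorem2 (R : realType) (d : nat) (V : seq 'rV[R]_d)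
    (tau : seq (seq 'rV[R]_d)) (Q : seq 'rV[R]_d) :
  (2 <= d)%N ->
  uniq V ->
  general_position V ->
  is_delaunay_mesh V tau ->
  uniq Q -> {subset Q <= V} -> (d <= size Q)%N ->
  (exists (c : 'rV[R]_d) (rho : R),
     min_covering_sphere Q c rho /\
     forall v, v \in V -> v \notin Q -> ~ (sqdist v c <= rho)) ->
  forall p1 p2 : 'rV[R]_d,
    p1 \in V -> p1 \notin Q -> p2 \in V -> p2 \notin Q ->
    (exists x, in_segment p1 p2 x /\ in_conv Q x) ->
    ~ is_mesh_edge tau p1 p2.
Proof.
move=> _ _ _ [[HC _] Hdel] _ QV _ [c [rho [[Qin _] Hout]]] p1 p2 p1V p1Q p2V p2Q
  [x [[t [/andP[t0 t1] ->]] [w [w0 [w1 xw]]]]] [_ [C Ctau /andP[p1C p2C]]].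
have [sC _ _ aiC] := HC C Ctau.
have [c' [r Hr]] := @circum R d C sC aiC.
pose K := fun y => sqdist y c' - sqdist y c.
have Kq : forall q, q \in Q -> r - rho <= K q.
  move=> q qQ; have qV := QV q qQ.
  have H1 : r <= sqdist q c'.
    case qC: (q \in C); first by rewrite Hr.
    rewrite leNgt; apply/negP; apply: (Hdel C Ctau c' r Hr q qV); by rewrite qC.
  have := Qin q qQ; rewrite /K; lra.
have Kp : forall p, p \in V -> p \notin Q -> p \in C -> K p < r - rho.
  move=> p pV pQ pC; have H2 : rho < sqdist p c by rewrite ltNge; apply/negP; exact: Hout.
  rewrite /K Hr //; lra.
have Kseg : K ((1 - t) *: p1 + t *: p2) = (1 - t) * K p1 + t * K p2.
  rewrite /K !sqdistB Lf_seg; ring.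
have Ksum : K (\sum_i w i *: Q`_i) = \sum_i w i * K Q`_i.
  rewrite /K sqdistB Lf_sum; set e := \sum_i (_ - _).
  under [RHS]eq_bigr => i _ do rewrite sqdistB -/e mulrDr.
  by rewrite big_split /= -big_distrl /= w1 mul1r.
have Hge : r - rho <= K ((1 - t) *: p1 + t *: p2).
  rewrite xw Ksum.
  have -> : r - rho = \sum_i w i * (r - rho) by rewrite -mulr_suml w1 mul1r.
  apply: ler_sum => i _; apply: ler_wpM2l => //; apply: Kq; exact: mem_nth.
move: Hge; rewrite Kseg.
have := Kp p1 p1V p1Q p1C; have := Kp p2 p2V p2Q p2C.
move: (K p1) (K p2) => k1 k2 h2 h1.
have [tl|tg] := ltP t 1.
  have A : (1 - t) * k1 < (1 - t) * (r - rho) by rewrite ltr_pM2l // subr_gt0.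
  have B : t * k2 <= t * (r - rho) by rewrite ler_wpM2l // ltW.
  lra.
have -> : t = 1 by lra.
rewrite subrr mul0r add0r mul1r; lra.
Qed.
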